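(* Let $(G,k)$ be an instance and $S\subseteq V$ with $|S|\le 4k$. If a large-dense vertex $v$ lies in a connected component of $G-S$ that is a tree, then every feasible solution contains $v$; consequently $(G,k)$ is a yes-instance iff $(G-v,k-1)$ is.
   Context: Graphs are undirected, without self-loops, possibly with multi-edges. $N(v)$ is the set of vertices adjacent to $v$; $\rho(v)$ is the number of unordered pairs $\{u_1,u_2\}\subseteq N(v)$ joined by at least one edge. A vertex $v$ is large-dense if $|N(v)|>7k$ and $\rho(v)> |N(v)|(|N(v)|-1)/4$. A vertex set induces a clique if between any two distinct vertices there is exactly one edge, and a tree if it is connected and acyclic (two parallel edges form a cycle). A feasible solution is $X\subseteq V$, $|X|\le k$, with every component of $G-X$ a clique or a tree. *)

(* Defs.v *)
(* A multigraph on a finite vertex type V is given by an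
   edge-multiplicity function m : V -> V -> nat (symmetric, loopless, checked
   by [multigraph]); the actual graph G is the subgraph induced on a vertex
   set W : {set V}, so that G - X is the graph on W :\: X. *)
From mathcomp Require Import all_boot.
Set Implicit Arguments. Unset Strict Implicit. Unset Printing Implicit Defensive.

Section Graphs.
Variable V : finType.
Variable m : V -> V -> nat.

Definition multigraph : Prop :=
  (forall x y, m x y = m y x) /\ (forall x, m x x = 0).

Definition adj (A : {set V}) : rel V :=
  fun a b => [&& a \in A, b \in A & 0 < m a b].

Definition nbhd (W : {set V}) (v : V) : {set V} :=
  [set u in W | 0 < m v u].

Definition rho (W : {set V}) (v : V) : nat :=
  #|[set P : {set V} | [&& P \subset nbhd W v, #|P| == 2 &
        [exists x in P, exists y in P, (x != y) && (0 < m x y)]]]|.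

Definition large_dense (W : {set V}) (k : nat) (v : V) : Prop :=
  7 * k < #|nbhd W v| /\
  #|nbhd W v| * (#|nbhd W v| - 1) < 4 * rho W v.

Definition component (A : {set V}) (x : V) : {set V} :=
  [set y | connect (adj A) x y].

Definition is_clique (C : {set V}) : Prop :=
  forall a b, a \in C -> b \in C -> a != b -> m a b = 1.

Definition connected_set (C : {set V}) : Prop :=
  C != set0 /\ forall a b, a \in C -> b \in C -> connect (adj C) a b.

(* acyclic: no 2-cycle (parallel edges) and no simple cycle of length >= 3 *)
Definition acyclic_set (C : {set V}) : Prop :=
  (forall a b, a \in C -> b \in C -> m a b <= 1) /\
  (forall p : seq V, 3 <= size p -> uniq p -> all (mem C) p ->
     ~ cycle (adj C) p).

Definition is_tree (C : {set V}) : Prop := connected_set C /\ acyclic_set C.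

Definition feasible (W : {set V}) (k : nat) (X : {set V}) : Prop :=
  [/\ X \subset W, #|X| <= k &
      forall x, x \in W :\: X ->
        is_clique (component (W :\: X) x) \/ is_tree (component (W :\: X) x)].

Definition yes_instance (W : {set V}) (k : nat) : Prop :=
  exists X, feasible W k X.

End Graphs.

(* Main.v *)
Require Import Defs.
From mathcomp Require Import all_boot.
From mathcomp Require Import zify.

Lemma triangle (V : finType) (m : V -> V -> nat) (A : {set V}) (v a b : V) :
  multigraph m -> acyclic_set m (component m A v) -> v \in A -> a \in A -> b \in A ->
  0 < m v a -> 0 < m v b -> 0 < m a b -> False.
Proof.
move=> [msym mirr] [_ Hac] vA aA bA va vb ab.
have Cv : v \in component m A v by rewrite inE connect0.
have Ca : a \in component m A v by rewrite inE; apply: connect1; rewrite /adj vA aA va.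
have Cb : b \in component m A v by rewrite inE; apply: connect1; rewrite /adj vA bA vb.
have nva : v != a by apply/eqP => E; move: va; rewrite -E mirr.
have nvb : v != b by apply/eqP => E; move: vb; rewrite -E mirr.
have nab : a != b by apply/eqP => E; move: ab; rewrite -E mirr.
apply: (Hac [:: v; a; b]) => //.
- by rewrite /= !inE negb_or nva nvb nab.
- by rewrite /= Cv Ca Cb.
- by rewrite /= /adj Cv Ca Cb va ab (msym b v) vb.
Qed.

Theorem mainTheorem10 (V : finType) (m : V -> V -> nat) (W S : {set V})
    (k : nat) (v : V) :
  multigraph m ->
  S \subset W -> #|S| <= 4 * k ->
  v \in W -> large_dense m W k v ->
  v \in W :\: S -> is_tree m (component m (W :\: S) v) ->
  (forall X, feasible m W k X -> v \in X) /\
  (yes_instance m W k <-> (0 < k /\ yes_instance m (W :\ v) k.-1)).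
Proof.
move=> Hmg SW cardS vW [Hd Hrho] vWS Htree.
rewrite /rho in Hrho.
set N := nbhd m W v in Hd Hrho.
set R := [set P : {set V} | _] in Hrho.
have Hd2 : 1 < #|N|.
  have : 0 < #|R| by lia.
  rewrite card_gt0 => /set0Pn [P]; rewrite inE => /and3P [PN /eqP P2 _].
  by have := subset_leq_card PN; rewrite P2.
have part1 : forall X, feasible m W k X -> v \in X.
  move=> X [XW cX Hcomp]; apply/negPn/negP => vX.
  have vWX : v \in W :\: X by rewrite inE vX vW.
  case: (Hcomp v vWX) => [Hcl | [_ Hac]].
  - have : 1 < #|N :\: (X :|: S)|.
      rewrite cardsD.
      have h1 := subset_leq_card (subsetIr N (X :|: S)).
      have h2 := cardsU X S.
      lia.
    case/card_gt1P => a [b [aN bN ab]].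
    rewrite !inE in aN bN.
    case/and3P: aN => /norP [aX aS] aW va.
    case/and3P: bN => /norP [bX bS] bW vb.
    have Ca : a \in component m (W :\: X) v
      by rewrite inE; apply: connect1; rewrite /adj vWX !inE aX aW va.
    have Cb : b \in component m (W :\: X) v
      by rewrite inE; apply: connect1; rewrite /adj vWX !inE bX bW vb.
    have mab := Hcl a b Ca Cb ab.
    have aWS : a \in W :\: S by rewrite inE aS aW.
    have bWS : b \in W :\: S by rewrite inE bS bW.
    have mab' : 0 < m a b by rewrite mab.
    exact: (@triangle V m (W :\: S) v a b Hmg (proj2 Htree) vWS aWS bWS va vb mab').
  - have sub : R \subset [set [set p.1; p.2] | p in setX X N].
      apply/subsetP => P; rewrite inE => /and3P [PN /eqP P2 /existsP [x /andP [xP /existsP [y /andP [yP /andP [xy mxy]]]]]].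
      have PE : P = [set x; y].
        apply/eqP; rewrite eq_sym eqEcard; apply/andP; split.
          by apply/subsetP => z; rewrite !inE => /orP [] /eqP ->.
        by rewrite P2 cards2 xy.
      have xN := subsetP PN x xP; have yN := subsetP PN y yP.
      case xX: (x \in X).
        by apply/imsetP; exists (x, y) => //; rewrite in_setX xX yN.
      case yX: (y \in X).
        apply/imsetP; exists (y, x); first by rewrite in_setX yX xN.
        by rewrite PE; apply/setP => z; rewrite !inE orbC.
      exfalso; rewrite !inE in xN yN.
      case/andP: xN => xW vx; case/andP: yN => yW vy.
      have xWX : x \in W :\: X by rewrite inE xX xW.
      have yWX : y \in W :\: X by rewrite inE yX yW.
      exact: (@triangle V m (W :\: X) v x y Hmg Hac vWX xWX yWX vx vy mxy).
    have h1 := subset_leq_card sub.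
    have h2 := leq_imset_card (fun p : V * V => [set p.1; p.2]) (setX X N).
    have h12 := leq_trans h1 h2.
    rewrite cardsX in h12.
    have h3 : #|X| * #|N| <= k * #|N| by apply: leq_mul.
    have h4 : 4 * k * #|N| <= #|N| * (#|N| - 1).
      rewrite mulnC; apply: leq_mul => //; lia.
    lia.
split => //; split.
- move=> [X HX]; have vX := part1 X HX.
  case: HX => [XW cX Hcomp].
  have cXv : #|X| = (v \in X) + #|X :\ v| := cardsD1 v X.
  rewrite vX in cXv.
  split; first lia.
  have Eq : (W :\ v) :\: (X :\ v) = W :\: X.
    apply/setP => z; rewrite !inE.
    by case: (eqVneq z v) => [->|]; rewrite ?vX.
  exists (X :\ v); split.
  + by apply/subsetP => z; rewrite !inE => /andP [-> /(subsetP XW) ->].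
  + lia.
  + by rewrite Eq.
- move=> [kpos [X [XW cX Hcomp]]].
  have Eq : (W :\ v) :\: X = W :\: (v |: X).
    apply/setP => z; rewrite !inE.
    by case: (z == v); case: (z \in X); case: (z \in W).
  exists (v |: X); split.
  + apply/subsetP => z; rewrite !inE => /orP [/eqP -> //|/(subsetP XW)].
    by rewrite !inE => /andP [].
  + have := cardsU1 v X; lia.
  + by rewrite -Eq.
Qed.
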